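(* Let $d\ge 2$ and let $D\subset T_d$ be a domain with $|D|\ge 2$. Then $D$ is isoperimetrically optimal, i.e. $|\partial D|=I_d(|D|)$, if and only if $\tau(D)\le d-2$.
   Context: $T_d$ is the $d$-regular tree (connected, acyclic, every vertex of degree $d$). A domain is a finite nonempty connected set $D$ of vertices of $T_d$, identified with its induced subgraph. For $x\in D$, $\deg_D(x)$ is the number of neighbours of $x$ lying in $D$. The (inner vertex) boundary is $\partial D=\{x\in D:\deg_D(x)<d\}$. For $k\ge1$, $I_d(k)=\min\{|\partial D| : D\subset T_d \text{ a domain with } |D|=k\}$. For a domain with $|D|\ge 2$, the boundary branching excess is $\tau(D)=\sum_{x\in\partial D}(\deg_D(x)-1)$. *)

(* Defs.v *)
(* Model of the d-regular tree T_d: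
   vertices = reduced words over the alphabet {0,...,d-1} with no two
   consecutive equal letters (Cayley graph of the free product of d copies
   of Z/2); w and wa are adjacent. The root [::] has d neighbours, every
   other word w (last letter a) has d-1 children w b (b <> a) and 1 parent. *)
From mathcomp Require Import all_boot.
Set Implicit Arguments. Unset Strict Implicit. Unset Printing Implicit Defensive.

Definition vertex := seq nat.

Definition valid (d : nat) (w : vertex) : bool :=
  all (fun a => a < d) w && sorted (fun a b => a != b) w.

Definition parent (w : vertex) : vertex := take (size w).-1 w.

Definition adj : rel vertex := fun u v =>
  ((v != [::]) && (parent v == u)) || ((u != [::]) && (parent u == v)).

Definition connected_in (D : seq vertex) : Prop :=
  forall x y, x \in D -> y \in D ->
    exists p : seq vertex, [&& path adj x p, last x p == y & all (mem D) p].

Definition domain (d : nat) (D : seq vertex) : Prop :=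
  [/\ D != [::], uniq D, all (valid d) D & connected_in D].

Definition degD (D : seq vertex) (x : vertex) : nat := count (adj x) D.

Definition bdry (d : nat) (D : seq vertex) : seq vertex :=
  [seq x <- D | degD D x < d].

Definition Id_is (d k m : nat) : Prop :=
  (exists D, domain d D /\ size D = k /\ size (bdry d D) = m) /\
  (forall D, domain d D -> size D = k -> m <= size (bdry d D)).

Definition tau (d : nat) (D : seq vertex) : nat :=
  \sum_(x <- bdry d D) (degD D x - 1).

(* Main.v *)
Require Import Defs.
From mathcomp Require Import all_boot zify.
Set Implicit Arguments. Unset Strict Implicit. Unset Printing Implicit Defensive.

Lemma parent_rcons (p : vertex) a : parent (rcons p a) = p.
Proof. by rewrite /parent size_rcons /= -cats1 take_size_cat. Qed.

Lemma size_parent (v : vertex) : size (parent v) = (size v).-1.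
Proof. rewrite /parent size_take; case: v => //= a v; by rewrite ltnSn. Qed.

Lemma adj_sym : symmetric adj.
Proof. by move=> u v; rewrite /adj orbC. Qed.

Lemma adj_irr v : adj v v = false.
Proof.
rewrite /adj orbb; case: v => //= a v; apply/eqP => H.
by have := congr1 size H; rewrite size_parent /= => /eqP; rewrite eqn_leq ltnn andbF.
Qed.

Lemma count_big (T : Type) (a : pred T) s : count a s = \sum_(y <- s) (a y : nat).
Proof. elim: s => [|x s IH]; by rewrite ?big_nil ?big_cons //= IH. Qed.

Definition pre (v x : vertex) := take (size v) x == v.

Lemma pre_child v x y : pre v x -> y != [::] -> parent y == x -> pre v y.
Proof.
move=> /eqP Hv; case/lastP: y => // p a _; rewrite parent_rcons => /eqP ->.
have Hs : size v <= size x by rewrite -Hv size_take; case: ifP => // /ltnW.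
by rewrite /pre -cats1 takel_cat // Hv.
Qed.

Lemma pre_parent v x : pre v x -> x != v -> pre v (parent x).
Proof.
move=> /eqP Hv Hne; rewrite /pre /parent takeC.
case: (ltnP (size v) (size x)) => H.
  by rewrite Hv take_oversize //; case: (size x) H.
by move: Hv; rewrite take_oversize // => E; rewrite E eqxx in Hne.
Qed.

Lemma pre_size v x : pre v x -> size v <= size x.
Proof. by move=> /eqP <-; rewrite size_take; case: ifP => // /ltnW. Qed.

Lemma pre_eq v x : pre v x -> size x <= size v -> x = v.
Proof. by move=> /eqP Hv Hs; rewrite take_oversize in Hv. Qed.

Lemma path_exit v p : forall x, pre v x -> path adj x p -> ~~ pre v (last x p) ->
  (v != [::]) && (parent v \in p).
Proof.
elim: p => [|y p IH] x Hx /=; first by rewrite Hx.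
case/andP=> Ha Hp Hl.
case Hy: (pre v y); first by case/andP: (IH y Hy Hp Hl) => -> H; rewrite inE H orbT.
move: Ha; rewrite /adj; case/orP=> /andP[H1 H2].
  by rewrite (pre_child Hx H1 H2) in Hy.
case: (eqVneq x v) => Exv.
  subst x; rewrite H1 /=; by rewrite (eqP H2) mem_head.
by rewrite -(eqP H2) (pre_parent Hx Exv) in Hy.
Qed.

Lemma pre_refl v : pre v v.
Proof. by rewrite /pre take_size. Qed.

Lemma ex_min (T : eqType) (f : T -> nat) (D : seq T) : D != [::] ->
  exists r, r \in D /\ forall w, w \in D -> f r <= f w.
Proof.
elim: D => // a D IH _; case: (eqVneq D [::]) => [->|/IH [r [Hr Hm]]].
  by exists a; split; rewrite ?mem_head // => w; rewrite mem_seq1 => /eqP ->.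
case: (leqP (f a) (f r)) => H.
  exists a; split; first exact: mem_head.
  move=> w; rewrite in_cons => /orP[/eqP -> //|/Hm]; exact: leq_trans.
exists r; split; first by rewrite in_cons Hr orbT.
move=> w; rewrite in_cons => /orP[/eqP -> |/Hm //]; exact: ltnW.
Qed.

Lemma ex_max (T : eqType) (f : T -> nat) (D : seq T) : D != [::] ->
  exists r, r \in D /\ forall w, w \in D -> f w <= f r.
Proof.
elim: D => // a D IH _; case: (eqVneq D [::]) => [->|/IH [r [Hr Hm]]].
  by exists a; split; rewrite ?mem_head // => w; rewrite mem_seq1 => /eqP ->.
case: (leqP (f r) (f a)) => H.
  exists a; split; first exact: mem_head.
  move=> w; rewrite in_cons => /orP[/eqP -> //|/Hm H']; exact: leq_trans H' H.
exists r; split; first by rewrite in_cons Hr orbT.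
move=> w; rewrite in_cons => /orP[/eqP -> |/Hm //]; exact: ltnW.
Qed.

Definition Pp (D : seq vertex) (v : vertex) := (v != [::]) && (parent v \in D).

Lemma top_lemma d D : domain d D ->
  exists r, r \in D /\ ~~ Pp D r /\ forall v, v \in D -> v != r -> Pp D v.
Proof.
case=> Hne Hu Hv Hc.
have [r [Hr Hm]] := ex_min size Hne.
exists r; split => //; split.
  apply/negP => /andP[Hn /Hm]; rewrite size_parent.
  by case: r Hn {Hr Hm} => //= a r _; rewrite ltnn.
move=> v Hv' Hvr.
have [p /and3P[Hp /eqP Hl Ha]] := Hc v r Hv' Hr.
have Hpre : ~~ pre v (last v p).
  rewrite Hl; apply/negP => Hpr; move: Hvr; rewrite -(pre_eq Hpr) ?eqxx //.
  exact: Hm.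
have /andP[H1 H2] := path_exit (pre_refl v) Hp Hpre.
by rewrite /Pp H1 /=; move/allP: Ha; apply.
Qed.

Lemma countPp d D : domain d D -> count (Pp D) D = (size D).-1.
Proof.
move=> HD; have [r [Hr [Hnr Hall]]] := top_lemma HD.
case: HD => _ Hu _ _.
have E : count (predC (Pp D)) D = 1.
  rewrite -[RHS]/(nat_of_bool true) -Hr -(count_uniq_mem r Hu).
  apply: eq_in_count.
  move=> v Hv /=; case: (eqVneq v r) => [->|Hvr]; first by rewrite Hnr.
  by rewrite Hall.
by have := count_predC (Pp D) D; rewrite E; lia.
Qed.

Lemma sum_par D : uniq D ->
  \sum_(x <- D) count (fun y => (x != [::]) && (parent x == y)) D = count (Pp D) D.
Proof.
move=> Hu; rewrite count_big; apply: eq_bigr => x _.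
rewrite /Pp; case: (x != [::]) => /=; last by rewrite count_pred0.
rewrite -(count_uniq_mem (parent x) Hu); apply: eq_count => y /=.
by rewrite eq_sym.
Qed.

Lemma sum_deg d D : domain d D -> \sum_(x <- D) degD D x = 2 * (size D).-1.
Proof.
move=> HD; have Hu : uniq D by case: HD.
have E : forall x, degD D x =
  count (fun y => (y != [::]) && (parent y == x)) D +
  count (fun y => (x != [::]) && (parent x == y)) D.
  move=> x; rewrite -count_predUI.
  rewrite (eq_count (a1 := predI _ _) (a2 := pred0)) ?count_pred0 ?addn0.
    by apply: eq_count => y.
  move=> y /=; apply/negP => /andP[/andP[H1 /eqP H2] /andP[H3 /eqP H4]].
  have := congr1 size H2; rewrite -H4 !size_parent.
  by case: x H3 {H2 H4} => //= a x _; case: (size x) => //= n; lia.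
rewrite (eq_bigr _ (fun x _ => E x)) big_split /= sum_par //.
rewrite (eq_bigr (fun x => \sum_(y <- D) ((y != [::]) && (parent y == x) : nat)));
  last by move=> x _; rewrite count_big.
rewrite exchange_big /=.
rewrite (eq_bigr (fun y => count (fun x => (y != [::]) && (parent y == x)) D));
  last by move=> y _; rewrite count_big.
by rewrite sum_par // (countPp HD); lia.
Qed.

Lemma valid_rcons d x a : valid d (rcons x a) =
  [&& valid d x, a < d & (x == [::]) || (last 0 x != a)].
Proof.
rewrite /valid all_rcons; case: x => [|h t] /=; first by rewrite andbT.
rewrite rcons_path; case: (a < d); case: (all _ t); case: (h < d) => //=.
by rewrite andbC.
Qed.

Definition nbf (x : vertex) (c : nat) : vertex :=
  if (x != [::]) && (c == last 0 x) then parent x else rcons x c.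

Definition nb d x := [seq nbf x c | c <- iota 0 d].

Lemma nb_size d x : size (nb d x) = d.
Proof. by rewrite size_map size_iota. Qed.

Lemma nb_uniq d x : uniq (nb d x).
Proof.
rewrite map_inj_in_uniq ?iota_uniq // => c1 c2 _ _; rewrite /nbf.
case: ifP => H1; case: ifP => H2.
- by case/andP: H1 => _ /eqP ->; case/andP: H2 => _ /eqP ->.
- move/(congr1 size); rewrite size_parent size_rcons.
  by case/andP: H1; case: x {H2} => //= a x _; lia.
- move/(congr1 size); rewrite size_parent size_rcons.
  by case/andP: H2; case: x {H1} => //= a x _; lia.
- by move=> E; have := congr1 (last 0) E; rewrite !last_rcons.
Qed.

Lemma nb_adj d x y : y \in nb d x -> adj x y.
Proof.
case/mapP => c _ ->; rewrite /nbf /adj; case: ifP => [/andP[-> _]|_].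
  by rewrite eqxx orbT.
by rewrite parent_rcons eqxx; case: x.
Qed.

Lemma nb_complete d x y : valid d x -> valid d y -> adj x y -> y \in nb d x.
Proof.
move=> Vx Vy; rewrite /adj; case/orP => /andP[H1 /eqP H2].
  move: Vy H2; case/lastP: y H1 => // p a _; rewrite valid_rcons parent_rcons.
  case/and3P=> _ Ha Hl Ep; subst p; apply/mapP; exists a.
    by rewrite mem_iota.
  rewrite /nbf; case: ifP => // /andP[Hx /eqP Ea].
  by move: Hl; rewrite (negbTE Hx) Ea eqxx.
apply/mapP; exists (last 0 x).
  rewrite mem_iota /=; move: Vx => /andP[/allP Ha _]; apply: Ha.
  by case: x H1 {H2} => //= h t _; apply: mem_last.
by rewrite /nbf H1 eqxx H2.
Qed.

Lemma deg_le d D x : valid d x -> uniq D -> all (valid d) D -> degD D x <= d.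
Proof.
move=> Vx Hu HV; rewrite /degD -size_filter -(nb_size d x).
apply: uniq_leq_size; first exact: filter_uniq.
move=> y; rewrite mem_filter => /andP[Ha Hy]; apply: nb_complete => //.
by move/allP: HV; apply.
Qed.

Lemma deg_ge1 d D x : domain d D -> 2 <= size D -> x \in D -> 0 < degD D x.
Proof.
case=> Hne Hu HV Hc Hs Hx.
have [y Hy Hyx] : exists2 y, y \in D & y != x.
  case: D Hne Hu Hs Hx {HV Hc} => // a [|b D] // _ /= /andP[Hab _] _.
  rewrite !in_cons => /orP[/eqP ->|Hx].
    by exists b; rewrite ?in_cons ?eqxx ?orbT //; apply: contra Hab => /eqP ->; rewrite mem_head.
  by exists a; rewrite ?mem_head //; apply/eqP => E; rewrite E in_cons Hx in Hab.
have [p /and3P[Hp /eqP Hl Ha]] := Hc x y Hx Hy.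
case: p Hp Hl Ha => [|z p] /=; first by move=> _ E; rewrite E eqxx in Hyx.
case/andP=> Hxz _ _ /andP[Hz _]; rewrite /degD -has_count; apply/hasP; by exists z.
Qed.

Lemma formula d D : domain d D -> 2 <= size D ->
  tau d D + size (bdry d D) + d * (size D - size (bdry d D)) = 2 * (size D).-1.
Proof.
move=> HD Hs; rewrite -(sum_deg HD).
have [_ Hu HV _] := HD.
rewrite (bigID (fun x => degD D x < d)) /=.
have E1 : \sum_(i <- D | degD D i < d) degD D i = tau d D + size (bdry d D).
  rewrite -big_filter /tau -sum1_size -big_split /=; apply: eq_big_seq => x.
  rewrite mem_filter => /andP[_ Hx]; have := deg_ge1 HD Hs Hx; lia.
have E2 : \sum_(i <- D | ~~ (degD D i < d)) degD D i = d * (size D - size (bdry d D)).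
  rewrite big_seq_cond (eq_bigr (fun _ => d)).
    rewrite big_const_seq iter_addn_0; congr (_ * _).
    rewrite /bdry size_filter -(count_predC (fun x => degD D x < d) D) addKn.
    by apply: eq_in_count => x /= ->.
  move=> x /andP[Hx Hn]; have := deg_le (allP HV x Hx) Hu HV; move: Hn; lia.
by rewrite E1 E2.
Qed.

Lemma conn_add D z y : connected_in D -> z \in D -> adj z y -> connected_in (y :: D).
Proof.
move=> Hc Hz Hzy.
have Hsub : forall p, all (mem D) p -> all (mem (y :: D)) p.
  move=> p; apply: sub_all => w /= Hw; by rewrite in_cons Hw orbT.
move=> u w; rewrite !in_cons => /orP[/eqP ->|Hu] /orP[/eqP ->|Hw].
- by exists [::]; rewrite /= eqxx.
- have [p /and3P[Hp Hl Ha]] := Hc z w Hz Hw.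
  exists (z :: p); rewrite /= Hp Hl adj_sym Hzy /= in_cons Hz orbT /=.
  exact: Hsub.
- have [p /and3P[Hp /eqP Hl Ha]] := Hc u z Hu Hz.
  exists (rcons p y); rewrite rcons_path Hp Hl Hzy last_rcons eqxx all_rcons /=.
  by rewrite mem_head /= Hsub.
- have [p /and3P[Hp Hl Ha]] := Hc u w Hu Hw.
  by exists p; rewrite Hp Hl Hsub.
Qed.

Definition Inv d D := [/\ domain d D, [::] \in D,
  (forall w, w \in D -> w != [::] -> parent w \in D) &
  exists x, forall w, w \in bdry d D -> w != x -> degD D w <= 1].

Lemma inv_base d : 2 <= d -> Inv d [:: [::]].
Proof.
move=> Hd; split => //.
- split => //; move=> u w; rewrite !mem_seq1 => /eqP -> /eqP ->.
  by exists [::].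
- by move=> w; rewrite mem_seq1 => /eqP ->; rewrite eqxx.
- by exists [::] => w; rewrite mem_filter mem_seq1 => /andP[_ /eqP ->]; rewrite eqxx.
Qed.

Lemma inv_step d D : 2 <= d -> Inv d D -> exists y, Inv d (y :: D) /\ y \notin D.
Proof.
move=> Hd [[Hne Hu HV Hc] H0 Hcl [x Hx]].
have [z [Hz Hzd Hzb]] : exists z, [/\ z \in D, degD D z < d &
    forall w, w \in bdry d D -> w != z -> degD D w <= 1].
  case Hxb: (x \in bdry d D).
    by exists x; move: Hxb; rewrite mem_filter => /andP[H1 H2]; split.
  have [z [Hz Hm]] := ex_max size Hne.
  have Hz1 : degD D z <= 1.
    rewrite /degD -size_filter; apply: (@leq_trans (size [:: parent z])) => //.
    apply: uniq_leq_size; first exact: filter_uniq.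
    move=> w; rewrite mem_filter /adj => /andP[Hw Hwd].
    case/orP: Hw => /andP[H1 /eqP H2]; last by rewrite H2 mem_seq1.
    have := Hm w Hwd; rewrite -H2 size_parent.
    by case: w H1 {H2 Hwd} => //= a w _; lia.
  exists z; split => //; first by lia.
  move=> w Hw _; apply: Hx => //; apply/eqP => E; by move: Hw; rewrite E Hxb.
have Vz : valid d z by move/allP: HV; apply.
have [y [Hy Vy Py]] : exists y, [/\ y \notin D, valid d y & (y != [::]) && (parent y == z)].
  case Hall: (all (mem D) (nb d z)).
    have : d <= degD D z.
      rewrite /degD -size_filter -{1}(nb_size d z); apply: uniq_leq_size.
        exact: nb_uniq.
      move=> w Hw; rewrite mem_filter (nb_adj Hw) /=; by move/allP: Hall; apply.
    by rewrite leqNgt Hzd.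
  case/allPn: Hall => w /mapP[c Hci ->] Hn.
  move: Hn; rewrite /nbf; case: ifP => [/andP[H1 _]|Hcond] Hn.
    by move: Hn; rewrite /= Hcl.
  exists (rcons z c); split => //.
    rewrite valid_rcons Vz /=; move: Hci; rewrite mem_iota /= => -> /=.
    case: (eqVneq z [::]) Hcond => //= _; by rewrite eq_sym => ->.
  by rewrite parent_rcons eqxx; case: z {Hz Hzd Hzb Vz Hcond Hn}.
case/andP: Py => Hy0 /eqP Py.
have Adj : forall w, w \in D -> adj w y = (w == z).
  move=> w Hw.
  have N : (w != [::]) && (parent w == y) = false.
    by apply/negP => /andP[Hw0 /eqP E]; move: Hy; rewrite -E Hcl.
  by rewrite /adj N orbF Hy0 Py /= eq_sym.
have Hzy : adj z y by rewrite Adj ?eqxx.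
have DegD : forall w, w \in D -> degD (y :: D) w = (w == z) + degD D w.
  by move=> w Hw; rewrite /degD /= Adj.
have Degy : degD (y :: D) y = 1.
  rewrite /degD /= adj_irr /=.
  rewrite -[RHS]/(nat_of_bool true) -Hz -(count_uniq_mem z Hu).
  by apply: eq_in_count => w Hw /=; rewrite adj_sym Adj.
exists y; split => //; split.
- split => //=; first by rewrite Hy Hu.
    by rewrite Vy HV.
  exact: conn_add Hc Hz Hzy.
- by rewrite in_cons H0 orbT.
- move=> w; rewrite in_cons => /orP[/eqP ->|Hw] Hw0; first by rewrite Py in_cons Hz orbT.
  by rewrite in_cons Hcl ?orbT.
- exists z => w; rewrite mem_filter in_cons => /andP[Hdg /orP[/eqP ->|Hw]] Hwz.
    by rewrite Degy.
  move: Hdg; rewrite DegD // (negbTE Hwz) /= => Hdg; apply: Hzb => //.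
  by rewrite mem_filter Hdg Hw.
Qed.

Lemma inv_exists d n : 2 <= d -> exists E, Inv d E /\ size E = n.+1.
Proof.
move=> Hd; elim: n => [|n [E [HE Hs]]]; first by exists [:: [::]]; split => //; exact: inv_base.
have [y [Hy _]] := inv_step Hd HE; by exists (y :: E); rewrite /= Hs.
Qed.

Lemma sum_one (s : seq vertex) (f : vertex -> nat) x m : uniq s ->
  (forall w, w \in s -> w != x -> f w = 0) -> (forall w, w \in s -> f w <= m) ->
  \sum_(w <- s) f w <= m.
Proof.
elim: s => [|a s IH] /= Hu H0 Hm; first by rewrite big_nil.
case/andP: Hu => Ha Hu; rewrite big_cons.
case: (eqVneq a x) => [Eax|Hax].
  have -> : \sum_(w <- s) f w = 0.
    rewrite big_seq big1 // => w Hw; apply: H0; first by rewrite in_cons Hw orbT.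
    by apply/eqP => E; move: Ha; rewrite Eax -E Hw.
  by rewrite addn0 Hm ?mem_head.
rewrite H0 ?mem_head // add0n; apply: IH => // w Hw.
  by apply: H0; rewrite in_cons Hw orbT.
by apply: Hm; rewrite in_cons Hw orbT.
Qed.

Lemma inv_tau d E : 2 <= d -> Inv d E -> tau d E <= d - 2.
Proof.
move=> Hd [[_ Hu _ _] _ _ [x Hx]].
rewrite /tau; apply: (sum_one (x := x)).
- exact: filter_uniq.
- by move=> w Hw Hwx; have := Hx w Hw Hwx; lia.
- move=> w; rewrite mem_filter => /andP[H _]; lia.
Qed.

Lemma bdry_le d D : size (bdry d D) <= size D.
Proof. by rewrite size_filter count_size. Qed.

Unset Implicit Arguments.

Theorem mainTheorem8 (d : nat) (D : seq vertex) :
  2 <= d -> domain d D -> 2 <= size D ->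
  (Id_is d (size D) (size (bdry d D)) <-> tau d D <= d - 2).
Proof.
move=> Hd HD Hs.
have FD := formula HD Hs; have LD := bdry_le d D.
split.
- case=> _ Hmin.
  have [E [HE SE]] := inv_exists (size D).-1 Hd.
  have HE' : domain d E by case: HE.
  have SE' : size E = size D by rewrite SE; case: (size D) Hs.
  have := Hmin E HE' SE'; have := inv_tau Hd HE.
  have S2 : 2 <= size E by rewrite SE'.
  have := formula HE' S2; have := bdry_le d E.
  rewrite SE'; nia.
- move=> Ht; split; first by exists D.
  move=> E HE SE; have S2 : 2 <= size E by rewrite SE.
  have := formula HE S2; have := bdry_le d E.
  rewrite SE; nia.
Qed.
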